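(* Let $f:X\to Y$ be a local homeomorphism between metric spaces. Then for every non-isolated point $x\in X$, $D_x^-f=\operatorname{sur}(f,x)$.
   Context: For a continuous map $f:X\to Y$ between metric spaces and a non-isolated point $x\in X$, the lower scalar derivative is $D_x^-f=\liminf_{z\to x,\,z\neq x}\frac{d(f(z),f(x))}{d(z,x)}\in[0,\infty]$. For $x\in X$ and $t>0$, $\operatorname{Sur}(f,x)(t)=\sup\{r\ge 0: B_r(f(x))\subset f(B_t(x))\}$, where $B_r(\cdot)$ denotes the open ball, and the surjection constant is $\operatorname{sur}(f,x)=\liminf_{t\to 0^+} t^{-1}\operatorname{Sur}(f,x)(t)$. *)

(* Defs.v *)
From Stdlib Require Import Reals.
From Coquelicot Require Import Coquelicot.
Open Scope R_scope.

Record MetricSpace := {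
  mcarrier :> Type;
  mdist : mcarrier -> mcarrier -> R;
  mdist_ge0 : forall x y, 0 <= mdist x y;
  mdist_eq0 : forall x y, mdist x y = 0 <-> x = y;
  mdist_sym : forall x y, mdist x y = mdist y x;
  mdist_tri : forall x y z, mdist x z <= mdist x y + mdist y z
}.

Arguments mdist {m} _ _.

Definition ball_m {X : MetricSpace} (x : X) (r : R) : X -> Prop :=
  fun z => mdist z x < r.

Definition open_m {X : MetricSpace} (U : X -> Prop) : Prop :=
  forall u, U u -> exists e, 0 < e /\ forall z, ball_m u e z -> U z.

Definition image_m {X Y : MetricSpace} (f : X -> Y) (A : X -> Prop) : Y -> Prop :=
  fun y => exists x, A x /\ f x = y.

Definition continuous_within_at {X Y : MetricSpace} (A : X -> Prop) (f : X -> Y) (x : X) :=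
  forall e, 0 < e -> exists d, 0 < d /\
    forall z, A z -> mdist z x < d -> mdist (f z) (f x) < e.

Definition continuous_m {X Y : MetricSpace} (f : X -> Y) :=
  forall x, continuous_within_at (fun _ => True) f x.

Definition local_homeomorphism {X Y : MetricSpace} (f : X -> Y) : Prop :=
  forall x, exists U : X -> Prop,
    U x /\ open_m U /\ open_m (image_m f U) /\
    exists g : Y -> X,
      (forall u, U u -> g (f u) = u) /\
      (forall y, image_m f U y -> U (g y) /\ f (g y) = y) /\
      (forall u, U u -> continuous_within_at U f u) /\
      (forall y, image_m f U y -> continuous_within_at (image_m f U) g y).

Definition non_isolated {X : MetricSpace} (x : X) : Prop :=
  forall e, 0 < e -> exists z, z <> x /\ mdist z x < e.

Definition liminf_punct {X : MetricSpace} (x : X) (h : X -> Rbar) : Rbar :=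
  Rbar_lub (fun v => exists r, 0 < r /\
     v = Rbar_glb (fun w => exists z, z <> x /\ mdist z x < r /\ w = h z)).

Definition lower_scalar_derivative {X Y : MetricSpace} (f : X -> Y) (x : X) : Rbar :=
  liminf_punct x (fun z => Finite (mdist (f z) (f x) / mdist z x)).

Definition Sur {X Y : MetricSpace} (f : X -> Y) (x : X) (t : R) : Rbar :=
  Rbar_lub (fun v => exists r, 0 <= r /\ v = Finite r /\
     forall y, ball_m (f x) r y -> image_m f (ball_m x t) y).

(* sur(f,x) = liminf_{t -> 0+} t^{-1} Sur(f,x)(t), as sup_{s>0} inf_{0<t<s} *)
Definition sur {X Y : MetricSpace} (f : X -> Y) (x : X) : Rbar :=
  Rbar_lub (fun v => exists s, 0 < s /\
     v = Rbar_glb (fun w => exists t, 0 < t /\ t < s /\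
                      w = Rbar_mult (Sur f x t) (Finite (/ t)))).

(* Main.v *)
Require Import Defs.
From Stdlib Require Import Reals Lra.
From Coquelicot Require Import Coquelicot.
Open Scope R_scope.

Lemma lub_ub (E : Rbar -> Prop) x : E x -> Rbar_le x (Rbar_lub E).
Proof. unfold Rbar_lub; destruct (Rbar_ex_lub E) as [l [H1 H2]]; simpl; auto. Qed.
Lemma lub_le (E : Rbar -> Prop) b : (forall x, E x -> Rbar_le x b) -> Rbar_le (Rbar_lub E) b.
Proof. unfold Rbar_lub; destruct (Rbar_ex_lub E) as [l [H1 H2]]; simpl; auto. Qed.
Lemma glb_lb (E : Rbar -> Prop) x : E x -> Rbar_le (Rbar_glb E) x.
Proof. unfold Rbar_glb; destruct (Rbar_ex_glb E) as [l [H1 H2]]; simpl; auto. Qed.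
Lemma le_glb (E : Rbar -> Prop) b : (forall x, E x -> Rbar_le b x) -> Rbar_le b (Rbar_glb E).
Proof. unfold Rbar_glb; destruct (Rbar_ex_glb E) as [l [H1 H2]]; simpl; auto. Qed.

Lemma mult_pinf t : 0 < t -> Rbar_mult p_infty (Finite (/ t)) = p_infty.
Proof.
  intros Ht. assert (0 < / t) by (apply Rinv_0_lt_compat; lra).
  simpl. destruct (Rle_dec 0 (/ t)); [|lra].
  destruct (Rle_lt_or_eq_dec 0 (/ t) r); [reflexivity|lra].
Qed.

Lemma mult_minf t : 0 < t -> Rbar_mult m_infty (Finite (/ t)) = m_infty.
Proof.
  intros Ht. assert (0 < / t) by (apply Rinv_0_lt_compat; lra).
  simpl. destruct (Rle_dec 0 (/ t)); [|lra].
  destruct (Rle_lt_or_eq_dec 0 (/ t) r); [reflexivity|lra].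
Qed.

Lemma Rbar_le_approx (a b : Rbar) : (forall c : R, Rbar_lt c a -> Rbar_le c b) -> Rbar_le a b.
Proof.
  intros H. destruct (Rbar_le_lt_dec a b) as [h|h]; auto.
  exfalso. destruct a as [a| |]; destruct b as [b| |]; simpl in h; try contradiction.
  - specialize (H ((a+b)/2)). simpl in H. lra.
  - specialize (H (a-1)). simpl in H. apply H. lra.
  - specialize (H (b+1)). simpl in H. lra.
  - specialize (H 0). simpl in H. auto.
Qed.

Theorem mainTheorem6 (X Y : MetricSpace) (f : X -> Y) :
  local_homeomorphism f ->
  forall x : X, non_isolated x ->
    lower_scalar_derivative f x = sur f x.
Proof.
  intros Hlh x Hni.
  destruct (Hlh x) as [U [Ux [UO [fUO [g [gf [fg [fc gc]]]]]]]].
  destruct (UO x Ux) as [e0 [He0 Hball]].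
  set (A := fun r => Rbar_glb (fun w => exists z, z <> x /\ mdist z x < r /\
                 w = Finite (mdist (f z) (f x) / mdist z x))).
  set (B := fun s => Rbar_glb (fun w => exists t, 0 < t /\ t < s /\
                      w = Rbar_mult (Sur f x t) (Finite (/ t)))).
  assert (Amono : forall r r', r' <= r -> Rbar_le (A r) (A r')).
  { intros r r' hr. unfold A. apply Rbar_glb_subset.
    intros w [z [? [? ?]]]. exists z. repeat split; auto; lra. }
  assert (Bmono : forall r r', r' <= r -> Rbar_le (B r) (B r')).
  { intros r r' hr. unfold B. apply Rbar_glb_subset.
    intros w [z [? [? ?]]]. exists z. repeat split; auto; lra. }
  assert (Dge : forall r, 0 < r -> Rbar_le (A r) (lower_scalar_derivative f x)).
  { intros r hr. apply lub_ub. exists r. split; auto. }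
  assert (Sge : forall s, 0 < s -> Rbar_le (B s) (sur f x)).
  { intros s hs. apply lub_ub. exists s. split; auto. }
  apply Rbar_le_antisym.
  -
    apply lub_le. intros v [r [hr ->]]. fold (A r).
    set (r' := Rmin r e0).
    assert (hr' : 0 < r') by (unfold r'; apply Rmin_pos; lra).
    apply Rbar_le_trans with (A r'); [apply Amono; unfold r'; apply Rmin_l|].
    destruct (gc (f x) (ex_intro _ x (conj Ux eq_refl)) r' hr') as [d1 [Hd1 Hg]].
    destruct (fUO (f x) (ex_intro _ x (conj Ux eq_refl))) as [d2 [Hd2 HfU]].
    set (dl := Rmin d1 d2).
    assert (Hdl : 0 < dl) by (unfold dl; apply Rmin_pos; lra).
    apply Rbar_le_approx. intros c hc.
    destruct (Rle_lt_dec c 0) as [hc0|hc0].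
    + apply Rbar_le_trans with (B 1); [|apply Sge; lra].
      apply le_glb. intros w [t [ht [_ ->]]].
      assert (HS : Rbar_le (Finite 0) (Sur f x t)).
      { apply lub_ub. exists 0. repeat split; try lra.
        intros y hy. unfold ball_m in hy. pose proof (mdist_ge0 _ y (f x)). lra. }
      destruct (Sur f x t) as [st| |]; simpl in HS; try contradiction.
      * simpl. assert (0 <= st * / t).
        { apply Rmult_le_pos; auto. left. apply Rinv_0_lt_compat; lra. }
        lra.
      * rewrite mult_pinf by lra; exact I.
    + apply Rbar_le_trans with (B (dl / c)); [|apply Sge; apply Rdiv_lt_0_compat; lra].
      apply le_glb. intros w [t [ht [hts ->]]].
      assert (hct : c * t <= dl).
      { apply Rmult_lt_compat_l with (r := c) in hts; auto.
        unfold Rdiv in hts. rewrite <- Rmult_assoc, (Rmult_comm c dl), Rmult_assoc,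
          Rinv_r, Rmult_1_r in hts; lra. }
      assert (HS : Rbar_le (Finite (c * t)) (Sur f x t)).
      { apply lub_ub. exists (c*t). repeat split.
        - apply Rmult_le_pos; lra.
        - intros y hy. unfold ball_m in hy.
          assert (hyU : image_m f U y).
          { apply HfU. unfold ball_m.
            assert (dl <= d2) by apply Rmin_r. lra. }
          destruct (fg y hyU) as [gyU fgy].
          assert (hgy : mdist (g y) (g (f x)) < r').
          { apply Hg; auto. assert (dl <= d1) by apply Rmin_l. lra. }
          rewrite gf in hgy; auto.
          exists (g y). split; auto. unfold ball_m.
          destruct (Rlt_le_dec (mdist (g y) x) t) as [h|h]; auto. exfalso.
          assert (hz : g y <> x).
          { intros E. rewrite E in h. rewrite (proj2 (mdist_eq0 _ x x) eq_refl) in h. lra. }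
          assert (HA : Rbar_le (A r') (Finite (mdist (f (g y)) (f x) / mdist (g y) x))).
          { apply glb_lb. exists (g y). repeat split; auto. }
          pose proof (Rbar_lt_le_trans _ _ _ hc HA) as hlt. simpl in hlt.
          rewrite fgy in hlt.
          assert (hpos : 0 < mdist (g y) x) by lra.
          apply Rmult_lt_compat_r with (r := mdist (g y) x) in hlt; auto.
          unfold Rdiv in hlt. rewrite Rmult_assoc, Rinv_l, Rmult_1_r in hlt; [|lra].
          assert (c * t <= c * mdist (g y) x) by (apply Rmult_le_compat_l; lra).
          lra. }
      destruct (Sur f x t) as [st| |]; simpl in HS; try contradiction.
      * simpl. apply Rmult_le_compat_r with (r := / t) in HS;
          [|left; apply Rinv_0_lt_compat; lra].
        rewrite Rmult_assoc, Rinv_r, Rmult_1_r in HS; lra.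
      * rewrite mult_pinf by lra; exact I.
  -
    apply lub_le. intros v [s [hs ->]]. fold (B s).
    set (s' := Rmin s e0).
    assert (hs' : 0 < s') by (unfold s'; apply Rmin_pos; lra).
    apply Rbar_le_trans with (B s'); [apply Bmono; unfold s'; apply Rmin_l|].
    apply Rbar_le_trans with (A s'); [|apply Dge; auto].
    apply le_glb. intros w [z [hz [hzs ->]]].
    assert (hd : 0 < mdist z x).
    { destruct (mdist_ge0 _ z x) as [h|h]; auto. exfalso. apply hz.
      apply mdist_eq0. auto. }
    apply Rbar_le_trans with (Rbar_mult (Sur f x (mdist z x)) (Finite (/ mdist z x))).
    + apply glb_lb. exists (mdist z x). repeat split; auto.
    + assert (HS : Rbar_le (Sur f x (mdist z x)) (Finite (mdist (f z) (f x)))).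
      { apply lub_le. intros u [r [hr [-> hb]]]. simpl.
        destruct (Rle_lt_dec r (mdist (f z) (f x))) as [h|h]; auto. exfalso.
        assert (hfz : ball_m (f x) r (f z)) by (unfold ball_m; lra).
        destruct (hb _ hfz) as [w [hw fw]]. unfold ball_m in hw.
        assert (Uz : U z).
        { apply Hball. unfold ball_m. assert (s' <= e0) by apply Rmin_r. lra. }
        assert (Uw : U w).
        { apply Hball. unfold ball_m. assert (s' <= e0) by apply Rmin_r. lra. }
        assert (w = z) by (rewrite <- (gf w Uw), <- (gf z Uz), fw; reflexivity).
        subst w. lra. }
      destruct (Sur f x (mdist z x)) as [st| |]; simpl in HS; try contradiction.
      * simpl. unfold Rdiv. apply Rmult_le_compat_r; auto.
        left; apply Rinv_0_lt_compat; lra.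
      * rewrite mult_minf by lra. exact I.
Qed.
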